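(* Let $K$ be a field of characteristic different from $2$. For a $K$-vector space $V$, let $w_K(V)$ be the set $V$ with constant $0$ and ternary operations $\bar p_1(x,y,z)=x+\frac{z-y}{2}$, $\bar p_2(x,y,z)=\frac{x+z}{2}$, $\bar p_3(x,y,z)=\frac{x-y}{2}+z$. Then $w_K(V)$ is an algebra of $\mathrm{Hex}_3$, the addition $+:V\times V\to V$ is a $\mathrm{Hex}_3$-homomorphism making $w_K(V)$ an internal abelian group in $\mathrm{Hex}_3$, and $V\mapsto w_K(V)$ (identity on underlying maps) defines a faithful functor $w_K:K\text{-}\mathrm{Vect}\to\mathrm{Ab}(\mathrm{Hex}_3)$. Moreover, for $V\neq 0$, the objects $w_K(V)$ and $h(V,+)$ of $\mathrm{Ab}(\mathrm{Hex}_3)$ are not isomorphic.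
   Context: $\mathrm{Hex}_3$ is the pointed variety with one constant $0$ and three ternary operations $p_1,p_2,p_3$ subject exactly to $p_1(a,0,0)=a$, $p_2(a,0,a)=a$, $p_3(0,0,a)=a$, $p_1(a,a,b)=p_2(a,a,b)$, $p_2(a,b,b)=p_3(a,b,b)$, $p_i(b,b,b)=b$ ($i=1,2,3$). $\mathrm{Ab}(\mathrm{Hex}_3)$ is the category of internal abelian groups in $\mathrm{Hex}_3$. For an abelian group $(G,+)$, $h(G)$ denotes the $\mathrm{Hex}_3$-algebra on $G$ with constant $0$, $p_1(x,y,z)=x-y+z$, $p_2(x,y,z)=p_3(x,y,z)=z$, with internal abelian group structure given by $+$. *)

(* Defs.v *)
From HB Require Import structures.
From mathcomp Require Import all_boot all_order all_algebra.
Set Implicit Arguments. Unset Strict Implicit. Unset Printing Implicit Defensive.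
Import GRing.Theory.
Local Open Scope ring_scope.

Record hex3_ops (T : Type) := Hex3Ops {
  hc0 : T;
  hp1 : T -> T -> T -> T;
  hp2 : T -> T -> T -> T;
  hp3 : T -> T -> T -> T }.

Definition hex3_axioms T (A : hex3_ops T) : Prop :=
  [/\ forall a, hp1 A a (hc0 A) (hc0 A) = a,
      forall a, hp2 A a (hc0 A) a = a,
      forall a, hp3 A (hc0 A) (hc0 A) a = a,
      forall a b, hp1 A a a b = hp2 A a a b &
      forall a b, hp2 A a b b = hp3 A a b b] /\
  forall b, [/\ hp1 A b b b = b, hp2 A b b b = b & hp3 A b b b = b].

Definition hex3_hom T U (A : hex3_ops T) (B : hex3_ops U) (f : T -> U) : Prop :=
  [/\ f (hc0 A) = hc0 B,
      forall x y z, f (hp1 A x y z) = hp1 B (f x) (f y) (f z),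
      forall x y z, f (hp2 A x y z) = hp2 B (f x) (f y) (f z) &
      forall x y z, f (hp3 A x y z) = hp3 B (f x) (f y) (f z)].

Definition hex3_prod T U (A : hex3_ops T) (B : hex3_ops U) : hex3_ops (T * U) :=
  Hex3Ops (hc0 A, hc0 B)
    (fun x y z => (hp1 A x.1 y.1 z.1, hp1 B x.2 y.2 z.2))
    (fun x y z => (hp2 A x.1 y.1 z.1, hp2 B x.2 y.2 z.2))
    (fun x y z => (hp3 A x.1 y.1 z.1, hp3 B x.2 y.2 z.2)).

Definition wK (K : fieldType) (V : lmodType K) : hex3_ops V :=
  Hex3Ops 0
    (fun x y z => x + (2%:R : K)^-1 *: (z - y))
    (fun x y z => (2%:R : K)^-1 *: (x + z))
    (fun x y z => (2%:R : K)^-1 *: (x - y) + z).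

Definition hG (G : zmodType) : hex3_ops G :=
  Hex3Ops 0 (fun x y z => x - y + z) (fun x y z => z) (fun x y z => z).

(* (A, +, -, 0) is an internal abelian group in Hex_3: the group operations
   are Hex_3-homomorphisms (the unit being the constant). The group laws
   themselves hold since G is a zmodType. *)
Definition internal_ab_group (G : zmodType) (A : hex3_ops G) : Prop :=
  [/\ hex3_axioms A,
      hc0 A = 0,
      hex3_hom (hex3_prod A A) A (fun p => p.1 + p.2) &
      hex3_hom A A (fun x => - x)].

Definition ab_hex3_hom (G H : zmodType) (A : hex3_ops G) (B : hex3_ops H)
  (f : G -> H) : Prop :=
  hex3_hom A B f /\ forall x y, f (x + y) = f x + f y.

Definition ab_hex3_iso (G H : zmodType) (A : hex3_ops G) (B : hex3_ops H) : Prop :=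
  exists (f : G -> H) (g : H -> G),
    [/\ cancel f g, cancel g f, ab_hex3_hom A B f & ab_hex3_hom B A g].

(* Main.v *)
Require Import Defs.
From HB Require Import structures.
From mathcomp Require Import all_boot all_order all_algebra.
Import GRing.Theory.
Local Open Scope ring_scope.

Section H.
Variables (K : fieldType) (hK : (2%:R : K) != 0) (V : lmodType K).
Let h : K := (2%:R)^-1.
Lemma half (a : V) : h *: a + h *: a = a.
Proof. by rewrite -scalerDl -mulr2n -mulr_natr mulVf // scale1r. Qed.
Lemma half2 (a : V) : h *: (a + a) = a.
Proof. by rewrite scalerDr half. Qed.
End H.

Theorem mainTheorem18 (K : fieldType) (hK : (2%:R : K) != 0) :
  (* w_K(V) is an internal abelian group in Hex_3 *)
  (forall V : lmodType K, internal_ab_group (wK V)) /\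
  (* functoriality: K-linear maps are morphisms of Ab(Hex_3) between the w_K's
     (the functor is the identity on underlying maps, hence faithful) *)
  (forall (V W : lmodType K) (f : {linear V -> W}),
      ab_hex3_hom (wK V) (wK W) f) /\
  (* for V <> 0, w_K(V) and h(V,+) are not isomorphic in Ab(Hex_3) *)
  (forall V : lmodType K, (exists v : V, v != 0) ->
      ~ ab_hex3_iso (wK V) (hG V)).
Proof.
split; last split.
- move=> V; split => //.
  + split; first split => /=.
    * by move=> a; rewrite subrr scaler0 addr0.
    * move=> a; rewrite scalerDr. exact: (half _ hK _ a).
    * by move=> a; rewrite subrr scaler0 add0r.
    * move=> a b; rewrite scalerBr scalerDr -{1}(half _ hK _ a) -addrA.
      by rewrite (addrC (_ *: a) (_ - _)) subrK.
    * move=> a b; rewrite scalerBr scalerDr -{3}(half _ hK _ b) addrA.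
      by rewrite subrK.
    * move=> b; split => /=; first by rewrite subrr scaler0 addr0.
      - by rewrite scalerDr; exact: (half _ hK _ b).
      - by rewrite subrr scaler0 add0r.
  + split => /=; first by rewrite addr0.
    * by move=> x y z /=; rewrite [in RHS]opprD [in RHS]addrACA [in RHS]scalerDr [in RHS]addrACA.
    * by move=> x y z /=; rewrite [in RHS]addrACA [in RHS]scalerDr.
    * by move=> x y z /=; rewrite [in RHS]opprD [in RHS]addrACA [in RHS]scalerDr [in RHS]addrACA.
  + split => /=; first by rewrite oppr0.
    * by move=> x y z; rewrite opprD -scalerN opprD.
    * by move=> x y z; rewrite -scalerN opprD.
    * by move=> x y z; rewrite opprD -scalerN opprD.
- move=> V W f; split; last by move=> x y; rewrite linearD.
  split => /=; first by rewrite linear0.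
  + by move=> x y z; rewrite linearD linearZ linearB.
  + by move=> x y z; rewrite linearZ linearD.
  + by move=> x y z; rewrite linearD linearZ linearB.
- move=> V [v v0] [f [g [fg gf [[_ _ f2 _] _] _]]].
  have /(congr1 g) := f2 v 0 0; rewrite /= !fg addr0 => /eqP.
  by rewrite scaler_eq0 invr_eq0 (negbTE hK) (negbTE v0).
Qed.
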